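(* For every $n\ge 2$ the Jones–Wenzl projectors in $\mathcal{TL}_0(\Bbbk)$ satisfy $$\mathrm{j}_n=(\mathrm{j}_{n-1}\otimes\mathrm{id}_{\mathbf 1})-(\mathrm{j}_{n-1}\otimes\mathrm{id}_{\mathbf 1})\circ(\mathrm{id}_{\mathbf{n-2}}\otimes\mathrm{cup})\circ(\mathrm{id}_{\mathbf{n-2}}\otimes\mathrm{cap})\circ(\mathrm{j}_{n-1}\otimes\mathrm{id}_{\mathbf 1}).$$
   Context: $\Bbbk$ is a field. $\mathcal{TL}_0(\Bbbk)$ is the strict $\Bbbk$-linear monoidal category with objects $\mathbf 0,\mathbf 1,\dots$, $\mathbf m\otimes\mathbf n=\mathbf{m+n}$, generated by $\mathrm{cup}:\mathbf 0\to\mathbf 2$ and $\mathrm{cap}:\mathbf 2\to\mathbf 0$ subject to $(\mathrm{id}_{\mathbf 1}\otimes\mathrm{cap})\circ(\mathrm{cup}\otimes\mathrm{id}_{\mathbf 1})=0=(\mathrm{cap}\otimes\mathrm{id}_{\mathbf 1})\circ(\mathrm{id}_{\mathbf 1}\otimes\mathrm{cup})$ and $\mathrm{cap}\circ\mathrm{cup}=\mathrm{id}_{\mathbf 0}$. A subset $I\subseteq\{1,\dots,n\}$ is apt if $n\notin I$ and no two elements of $I$ are consecutive; $\mathrm{cap}_{I,n}:\mathbf n\to\mathbf{n-2|I|}$ has caps joining strands $i,i+1$ for $i\in I$ and through-strands elsewhere, $\mathrm{cup}_{I,n}$ is its vertical reflection, and $\mathrm{j}_n=\sum_{I\text{ apt}}(-1)^{|I|}\mathrm{cup}_{I,n}\circ\mathrm{cap}_{I,n}\in\mathrm{End}(\mathbf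 n)$. *)

(* Defs.v *)
(* The Temperley-Lieb category TL_0(k) is encoded by its
   presentation: formal (untyped) string-diagram terms built from id, cup, cap,
   composition, tensor product and k-linear combinations, with a typing
   function, modulo the smallest congruence containing the axioms of a strict
   k-linear monoidal category (objects = nat, m (x) n = m + n) and the three
   defining relations of TL_0. *)
From HB Require Import structures.
From mathcomp Require Import all_boot all_order all_algebra.
Set Implicit Arguments. Unset Strict Implicit. Unset Printing Implicit Defensive.
Import GRing.Theory.
Local Open Scope ring_scope.

Section TL.
Variable K : fieldType.

Inductive tm : Type :=
| tid : nat -> tm
| tcup : tm
| tcap : tm
| tcomp : tm -> tm -> tm          (* tcomp g f = g o f *)
| ttens : tm -> tm -> tm
| tzero : nat -> nat -> tm
| tadd : tm -> tm -> tm
| tscal : K -> tm -> tm.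

Fixpoint ty (t : tm) : option (nat * nat) :=
  match t with
  | tid n => Some (n, n)
  | tcup => Some (0%N, 2%N)
  | tcap => Some (2%N, 0%N)
  | tcomp g f =>
      match ty f, ty g with
      | Some (a, b), Some (b', c) => if b == b' then Some (a, c) else None
      | _, _ => None
      end
  | ttens f g =>
      match ty f, ty g with
      | Some (a, b), Some (c, d) => Some ((a + c)%N, (b + d)%N)
      | _, _ => None
      end
  | tzero a b => Some (a, b)
  | tadd f g =>
      match ty f, ty g with
      | Some p, Some q => if p == q then Some p else None
      | _, _ => None
      end
  | tscal _ f => ty f
  end.

Inductive eqv : tm -> tm -> Prop :=
| e_refl t : eqv t t
| e_sym t u : eqv t u -> eqv u t
| e_trans t u v : eqv t u -> eqv u v -> eqv t v
| e_comp g g' f f' : eqv g g' -> eqv f f' -> eqv (tcomp g f) (tcomp g' f')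
| e_tens f f' g g' : eqv f f' -> eqv g g' -> eqv (ttens f g) (ttens f' g')
| e_add f f' g g' : eqv f f' -> eqv g g' -> eqv (tadd f g) (tadd f' g')
| e_scal c f f' : eqv f f' -> eqv (tscal c f) (tscal c f')
| e_assoc a b c d f g h : ty f = Some (a, b) -> ty g = Some (b, c) ->
    ty h = Some (c, d) -> eqv (tcomp h (tcomp g f)) (tcomp (tcomp h g) f)
| e_idl a b f : ty f = Some (a, b) -> eqv (tcomp (tid b) f) f
| e_idr a b f : ty f = Some (a, b) -> eqv (tcomp f (tid a)) f
| e_tassoc a b c d e h f g k : ty f = Some (a, b) -> ty g = Some (c, d) ->
    ty k = Some (e, h) -> eqv (ttens (ttens f g) k) (ttens f (ttens g k))
| e_tunitl a b f : ty f = Some (a, b) -> eqv (ttens (tid 0) f) f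
| e_tunitr a b f : ty f = Some (a, b) -> eqv (ttens f (tid 0)) f
| e_tid m n : eqv (ttens (tid m) (tid n)) (tid (m + n))
| e_interchange a b c a' b' c' f g f' g' :
    ty f = Some (a, b) -> ty g = Some (b, c) ->
    ty f' = Some (a', b') -> ty g' = Some (b', c') ->
    eqv (ttens (tcomp g f) (tcomp g' f')) (tcomp (ttens g g') (ttens f f'))
| e_addA a b f g h : ty f = Some (a, b) -> ty g = Some (a, b) ->
    ty h = Some (a, b) -> eqv (tadd f (tadd g h)) (tadd (tadd f g) h)
| e_addC a b f g : ty f = Some (a, b) -> ty g = Some (a, b) ->
    eqv (tadd f g) (tadd g f)
| e_add0 a b f : ty f = Some (a, b) -> eqv (tadd f (tzero a b)) f
| e_scal1 a b f : ty f = Some (a, b) -> eqv (tscal 1 f) f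
| e_scal0 a b f : ty f = Some (a, b) -> eqv (tscal 0 f) (tzero a b)
| e_scalA a b c d f : ty f = Some (a, b) ->
    eqv (tscal c (tscal d f)) (tscal (c * d) f)
| e_scalDl a b c d f : ty f = Some (a, b) ->
    eqv (tscal (c + d) f) (tadd (tscal c f) (tscal d f))
| e_scalDr a b c f g : ty f = Some (a, b) -> ty g = Some (a, b) ->
    eqv (tscal c (tadd f g)) (tadd (tscal c f) (tscal c g))
| e_compDl a b c g g' f : ty f = Some (a, b) -> ty g = Some (b, c) ->
    ty g' = Some (b, c) ->
    eqv (tcomp (tadd g g') f) (tadd (tcomp g f) (tcomp g' f))
| e_compDr a b c g f f' : ty f = Some (a, b) -> ty f' = Some (a, b) ->
    ty g = Some (b, c) ->
    eqv (tcomp g (tadd f f')) (tadd (tcomp g f) (tcomp g f'))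
| e_compZl a b c d g f : ty f = Some (a, b) -> ty g = Some (b, c) ->
    eqv (tcomp (tscal d g) f) (tscal d (tcomp g f))
| e_compZr a b c d g f : ty f = Some (a, b) -> ty g = Some (b, c) ->
    eqv (tcomp g (tscal d f)) (tscal d (tcomp g f))
| e_comp0l a b c f : ty f = Some (a, b) ->
    eqv (tcomp (tzero b c) f) (tzero a c)
| e_comp0r a b c g : ty g = Some (b, c) ->
    eqv (tcomp g (tzero a b)) (tzero a c)
| e_tensDl a b c d f f' g : ty f = Some (a, b) -> ty f' = Some (a, b) ->
    ty g = Some (c, d) ->
    eqv (ttens (tadd f f') g) (tadd (ttens f g) (ttens f' g))
| e_tensDr a b c d f g g' : ty f = Some (a, b) -> ty g = Some (c, d) ->
    ty g' = Some (c, d) ->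
    eqv (ttens f (tadd g g')) (tadd (ttens f g) (ttens f g'))
| e_tensZl a b c d e f g : ty f = Some (a, b) -> ty g = Some (c, d) ->
    eqv (ttens (tscal e f) g) (tscal e (ttens f g))
| e_tensZr a b c d e f g : ty f = Some (a, b) -> ty g = Some (c, d) ->
    eqv (ttens f (tscal e g)) (tscal e (ttens f g))
| e_tens0l a b c d g : ty g = Some (c, d) ->
    eqv (ttens (tzero a b) g) (tzero (a + c) (b + d))
| e_tens0r a b c d f : ty f = Some (a, b) ->
    eqv (ttens f (tzero c d)) (tzero (a + c) (b + d))
| e_zigzag1 : eqv (tcomp (ttens (tid 1) tcap) (ttens tcup (tid 1))) (tzero 1 1)
| e_zigzag2 : eqv (tcomp (ttens tcap (tid 1)) (ttens (tid 1) tcup)) (tzero 1 1)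
| e_circle : eqv (tcomp tcap tcup) (tid 0).

(* Subsets I of {1,...,n} are encoded as I : {set 'I_n}, the ordinal i
   standing for the position i+1. *)
Definition apt (n : nat) (I : {set 'I_n}) : bool :=
  [forall i : 'I_n, (i \in I) ==> (i.+1 < n)%N] &&
  [forall i : 'I_n, forall j : 'I_n, (i \in I) && (j \in I) ==> (j != i.+1 :> nat)].

Definition memI (n : nat) (I : {set 'I_n}) (k : nat) : bool :=
  [exists i in I, nat_of_ord i == k].

(* cap_{I,n}: scanning strands left to right, k = 0-based position of the
   current strand, r = number of remaining strands; a cap on strands k,k+1
   (positions k+1,k+2) when k+1 is in I, a through strand otherwise. *)
Fixpoint capw (P : nat -> bool) (k r : nat) : tm :=
  match r with
  | 0 => tid 0
  | r1.+1 =>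
      match r1 with
      | 0 => tid 1
      | r'.+1 => if P k then ttens tcap (capw P (k + 2) r')
                 else ttens (tid 1) (capw P k.+1 r1)
      end
  end.

Fixpoint cupw (P : nat -> bool) (k r : nat) : tm :=
  match r with
  | 0 => tid 0
  | r1.+1 =>
      match r1 with
      | 0 => tid 1
      | r'.+1 => if P k then ttens tcup (cupw P (k + 2) r')
                 else ttens (tid 1) (cupw P k.+1 r1)
      end
  end.

Definition capI (n : nat) (I : {set 'I_n}) : tm := capw (memI I) 0 n.
Definition cupI (n : nat) (I : {set 'I_n}) : tm := cupw (memI I) 0 n.

Definition jw (n : nat) : tm :=
  \big[tadd/tzero n n]_(I : {set 'I_n} | apt I)
     tscal ((-1) ^+ #|I|) (tcomp (cupI I) (capI I)).

End TL.

(* Main.v *)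
Require Import Defs.
From HB Require Import structures.
From mathcomp Require Import all_boot all_order all_algebra.
From mathcomp Require Import zify.
From Stdlib Require Import Setoid Morphisms.
Set Implicit Arguments. Unset Strict Implicit. Unset Printing Implicit Defensive.
Import GRing.Theory.
Local Open Scope ring_scope.

Section W.
Variable K : fieldType.
Notation tm := (tm K).
Notation eqv := (@eqv K).
Notation ty := (@ty K).

#[local] Instance eqv_equiv : Equivalence eqv.
Proof. split; [exact: e_refl | exact: e_sym | exact: e_trans]. Qed.
#[local] Instance comp_prop : Proper (eqv ==> eqv ==> eqv) (@tcomp K).
Proof. by move=> ? ? ? ? ? ?; apply: e_comp. Qed.
#[local] Instance tens_prop : Proper (eqv ==> eqv ==> eqv) (@ttens K).
Proof. by move=> ? ? ? ? ? ?; apply: e_tens. Qed.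
#[local] Instance add_prop : Proper (eqv ==> eqv ==> eqv) (@tadd K).
Proof. by move=> ? ? ? ? ? ?; apply: e_add. Qed.
#[local] Instance scal_prop c : Proper (eqv ==> eqv) (@tscal K c).
Proof. by move=> ? ? ?; apply: e_scal. Qed.

Definition wt (t : tm) := ty t != None.

Lemma wtP t : reflect (exists a b, ty t = Some (a, b)) (wt t).
Proof.
rewrite /wt; case: (ty t) => [[a b]|] /=; constructor; first by exists a, b.
by case=> ? [].
Qed.

Lemma tA f g h : wt f -> wt g -> wt h ->
  eqv (ttens (ttens f g) h) (ttens f (ttens g h)).
Proof.
move=> /wtP[a [b Hf]] /wtP[c [d Hg]] /wtP[e [k Hh]]; exact: e_tassoc Hf Hg Hh.
Qed.
Lemma tUl f : wt f -> eqv (ttens (tid K 0) f) f.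
Proof. by move=> /wtP[a [b Hf]]; exact: e_tunitl Hf. Qed.
Lemma tUr f : wt f -> eqv (ttens f (tid K 0)) f.
Proof. by move=> /wtP[a [b Hf]]; exact: e_tunitr Hf. Qed.

Fixpoint wgen (x : tm) (P : nat -> bool) (k r : nat) : tm :=
  match r with
  | 0 => tid K 0
  | r1.+1 =>
      match r1 with
      | 0 => tid K 1
      | r'.+1 => if P k then ttens x (wgen x P (k + 2) r')
                 else ttens (tid K 1) (wgen x P k.+1 r1)
      end
  end.

Fixpoint wcount (P : nat -> bool) (k r : nat) : nat :=
  match r with
  | 0 => 0
  | r1.+1 =>
      match r1 with
      | 0 => 1
      | r'.+1 => if P k then wcount P (k + 2) r'
                 else (wcount P k.+1 r1).+1
      end
  end.

Arguments wgen x P k r : simpl nomatch.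
Arguments wcount P k r : simpl nomatch.
Lemma wgenS x P k r : wgen x P k r.+2 =
  if P k then ttens x (wgen x P (k + 2) r) else ttens (tid K 1) (wgen x P k.+1 r.+1).
Proof. by []. Qed.
Lemma wcountS P k r : wcount P k r.+2 =
  if P k then wcount P (k + 2) r else (wcount P k.+1 r.+1).+1.
Proof. by []. Qed.

Lemma capwE P k r : capw K P k r = wgen (tcap K) P k r.
Proof.
elim/ltn_ind: r k => -[|[|r]] IH k; [by [] | by [] |].
change ((if P k then ttens (tcap K) (capw K P (k+2) r) else ttens (tid K 1) (capw K P k.+1 r.+1)) = if P k then ttens (tcap K) (wgen (tcap K) P (k+2) r) else ttens (tid K 1) (wgen (tcap K) P k.+1 r.+1)).
by rewrite !IH.
Qed.
Lemma cupwE P k r : cupw K P k r = wgen (tcup K) P k r.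
Proof.
elim/ltn_ind: r k => -[|[|r]] IH k; [by [] | by [] |].
change ((if P k then ttens (tcup K) (cupw K P (k+2) r) else ttens (tid K 1) (cupw K P k.+1 r.+1)) = if P k then ttens (tcup K) (wgen (tcup K) P (k+2) r) else ttens (tid K 1) (wgen (tcup K) P k.+1 r.+1)).
by rewrite !IH.
Qed.

Lemma ty_wcap P k r : ty (wgen (tcap K) P k r) = Some (r, wcount P k r).
Proof.
elim/ltn_ind: r k => -[|[|r]] IH k; [by [] | by [] |].
by rewrite wgenS wcountS; case: (P k) => /=; rewrite IH.
Qed.
Lemma ty_wcup P k r : ty (wgen (tcup K) P k r) = Some (wcount P k r, r).
Proof.
elim/ltn_ind: r k => -[|[|r]] IH k; [by [] | by [] |].
by rewrite wgenS wcountS; case: (P k) => /=; rewrite IH.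
Qed.

Lemma wt_wgen x P k r : wt x -> wt (wgen x P k r).
Proof.
move=> Hx; elim/ltn_ind: r k => -[|[|r]] IH k; [by [] | by [] |].
rewrite wgenS; case: (P k).
  move: Hx (IH r (ltnW (ltnSn _)) (k + 2)%N); rewrite /wt /=.
  by case: (ty x) => [[? ?]|]; case: (ty (wgen _ _ _ _)) => [[? ?]|].
move: (IH r.+1 (ltnSn _) k.+1); rewrite /wt /=.
by case: (ty (wgen _ _ _ _)) => [[? ?]|].
Qed.

Lemma wgen_ext x P Q k r : (forall j, (j < k + r)%N -> P j = Q j) ->
  wgen x P k r = wgen x Q k r.
Proof.
elim/ltn_ind: r k => -[|[|r]] IH k H; [by [] | by [] |].
rewrite !wgenS H; last by lia.
case: (Q k).
  by rewrite IH // => j Hj; apply: H; lia.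
by rewrite IH // => j Hj; apply: H; lia.
Qed.

Lemma wt_tid n : wt (tid K n). Proof. by []. Qed.

Lemma RP1 x P k r : wt x -> (forall j, j.+1 = (k + r)%N -> (k <= j)%N -> ~~ P j) ->
  eqv (wgen x P k r.+1) (ttens (wgen x P k r) (tid K 1)).
Proof.
move=> Hx; elim/ltn_ind: r k => -[|[|r]] IH k H; rewrite ?(wgenS x P k).
- symmetry; exact: (@e_tid K 0 1).
- have := H k (esym (addn1 k)) (leqnn k); move=> /negbTE ->; reflexivity.
- case: (P k).
  + rewrite (IH r _ (k + 2)%N) //; last by move=> j E1 E2; apply: H; lia.
    symmetry; apply: tA => //; exact: wt_wgen.
  + rewrite (IH r.+1 _ k.+1) //; last by move=> j E1 E2; apply: H; lia.
    symmetry; apply: tA => //; exact: wt_wgen.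
Qed.

Lemma RP2 x (P : nat -> bool) k r : wt x -> P (k + r)%N -> (forall j, j.+1 = (k + r)%N -> (k <= j)%N -> ~~ P j) ->
  eqv (wgen x P k r.+2) (ttens (wgen x P k r) x).
Proof.
move=> Hx; elim/ltn_ind: r k => -[|[|r]] IH k H1 H; rewrite ?(wgenS x P k).
- rewrite addn0 in H1; rewrite H1 tUr // tUl //; reflexivity.
- have := H k (esym (addn1 k)) (leqnn k); move=> /negbTE ->.
  rewrite addn1 in H1; rewrite wgenS H1 tUr //; reflexivity.
- case: (P k).
  + rewrite (IH r _ (k + 2)%N) //.
    * symmetry; apply: tA => //; exact: wt_wgen.
    * by have ->: (k + 2 + r = k + r.+2)%N by lia.
    * by move=> j E1 E2; apply: H; lia.
  + rewrite (IH r.+1 _ k.+1) //.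
    * symmetry; apply: tA => //; exact: wt_wgen.
    * by have ->: (k.+1 + r.+1 = k + r.+2)%N by lia.
    * by move=> j E1 E2; apply: H; lia.
Qed.

Arguments jw K n : simpl never.
Notation J := (jw K).
Notation i_ := (tid K).
Notation cup := (tcup K).
Notation cap := (tcap K).
Notation tadd := (@tadd K).

Ltac tyc := match goal with |- ty _ = _ => try solve [eauto];
  simpl; rewrite ?addn1 ?addn2 ?addn0 ?add0n ?addSn ?addnS ?eqxx /=;
  try reflexivity; try (congr (Some (_, _)); lia) end.
Ltac wtc := match goal with |- is_true (wt _) => rewrite /wt /= // end.
Ltac sc := try tyc; try wtc.

Lemma scal0z c a b : eqv (tscal c (tzero K a b)) (tzero K a b).
Proof.
transitivity (tscal c (tscal 0 (tzero K a b))).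
  by apply: e_scal; symmetry; apply: (e_scal0 (a:=a) (b:=b)).
rewrite e_scalA; try tyc. rewrite mulr0; exact: e_scal0.
Qed.

Section Sums.
Variable (T : Type) (a b : nat).
Implicit Types (r : seq T) (F G : T -> tm).

Lemma ty_big r (P : pred T) F : (forall i, P i -> ty (F i) = Some (a, b)) ->
  ty (\big[tadd/tzero K a b]_(i <- r | P i) F i) = Some (a, b).
Proof.
move=> H; elim: r => [|x r IH]; first by rewrite big_nil.
rewrite big_cons; case Px: (P x) => //=.
by rewrite IH H // eqxx.
Qed.

Lemma ty_big' r F : (forall i, ty (F i) = Some (a, b)) ->
  ty (\big[tadd/tzero K a b]_(i <- r) F i) = Some (a, b).
Proof. by move=> H; apply: ty_big => i _; apply: H. Qed.

Lemma big_eqv r F G : (forall i, eqv (F i) (G i)) ->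
  eqv (\big[tadd/tzero K a b]_(i <- r) F i) (\big[tadd/tzero K a b]_(i <- r) G i).
Proof.
move=> H; elim: r => [|x r IH]; first by rewrite !big_nil; reflexivity.
by rewrite !big_cons IH H; reflexivity.
Qed.

Lemma big_cat_eqv r1 r2 F : (forall i, ty (F i) = Some (a, b)) ->
  eqv (\big[tadd/tzero K a b]_(i <- r1 ++ r2) F i)
      (tadd (\big[tadd/tzero K a b]_(i <- r1) F i) (\big[tadd/tzero K a b]_(i <- r2) F i)).
Proof.
move=> H; elim: r1 => [|x r1 IH] /=.
  rewrite big_nil e_addC; first by rewrite e_add0; [reflexivity | apply: ty_big].
  - by [].
  - by apply: ty_big.
rewrite !big_cons IH e_addA; first reflexivity.
- exact: H.
- exact: ty_big.
- exact: ty_big.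
Qed.

Lemma addCA' A B C : ty A = Some (a, b) -> ty B = Some (a, b) -> ty C = Some (a, b) ->
  eqv (tadd A (tadd B C)) (tadd B (tadd A C)).
Proof.
move=> HA HB HC.
rewrite e_addA; sc. rewrite (e_addC (f := A)); sc. rewrite -e_addA; sc. reflexivity.
Qed.

Lemma big_tensl r F X c d : ty X = Some (c, d) -> (forall i, ty (F i) = Some (a, b)) ->
  eqv (ttens (\big[tadd/tzero K a b]_(i <- r) F i) X)
      (\big[tadd/tzero K (a + c) (b + d)]_(i <- r) ttens (F i) X).
Proof.
move=> HX H; elim: r => [|x r IH].
  rewrite !big_nil e_tens0l; sc. reflexivity.
rewrite !big_cons e_tensDl; sc; try exact: ty_big'.
rewrite IH; reflexivity.
Qed.

Lemma big_scal r F s : (forall i, ty (F i) = Some (a, b)) ->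
  eqv (tscal s (\big[tadd/tzero K a b]_(i <- r) F i))
      (\big[tadd/tzero K a b]_(i <- r) tscal s (F i)).
Proof.
move=> H; elim: r => [|x r IH].
  rewrite !big_nil scal0z; reflexivity.
rewrite !big_cons e_scalDr; sc; try exact: ty_big'.
rewrite IH; reflexivity.
Qed.
End Sums.

Section Perm.
Variable (T : eqType) (a b : nat).
Implicit Types (r : seq T) (F G : T -> tm).

Lemma big_rem_eqv r x F : (forall i, ty (F i) = Some (a, b)) -> x \in r ->
  eqv (\big[tadd/tzero K a b]_(i <- r) F i)
      (tadd (F x) (\big[tadd/tzero K a b]_(i <- rem x r) F i)).
Proof.
move=> H; elim: r => [|y r IH] //= xr.
case: eqP => [->|ne]; first by rewrite big_cons; reflexivity.
rewrite !big_cons IH; last by move: xr; rewrite in_cons => /orP[/eqP E|//]; case: ne.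
apply: addCA' => //; exact: ty_big'.
Qed.

Lemma big_perm_eqv r1 r2 F : (forall i, ty (F i) = Some (a, b)) -> perm_eq r1 r2 ->
  eqv (\big[tadd/tzero K a b]_(i <- r1) F i) (\big[tadd/tzero K a b]_(i <- r2) F i).
Proof.
move=> H; elim: r1 r2 => [|x r1 IH] r2 Hp.
  by move/perm_size: Hp; case: r2 => // _; reflexivity.
have xr2 : x \in r2 by rewrite -(perm_mem Hp) mem_head.
rewrite (big_rem_eqv H xr2) big_cons IH; first reflexivity.
by rewrite -(perm_cons x); apply: perm_trans Hp _; apply: perm_to_rem.
Qed.
Lemma big_eqv_in r F G : (forall i, i \in r -> eqv (F i) (G i)) ->
  eqv (\big[tadd/tzero K a b]_(i <- r) F i) (\big[tadd/tzero K a b]_(i <- r) G i).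
Proof.
elim: r => [|x r IH] H; first by rewrite !big_nil; reflexivity.
rewrite !big_cons IH ?H ?mem_head //; first reflexivity.
by move=> i ir; apply: H; rewrite in_cons ir orbT.
Qed.
End Perm.



Section Mem.
Variable n : nat.
Implicit Types (A B : {set 'I_n}).

Lemma memI_ord A (i : 'I_n) : memI A i = (i \in A).
Proof.
apply/existsP/idP => [[j /andP[jI /eqP E]]|iI]; last by exists i; rewrite iI eqxx.
by have -> : i = j by apply: val_inj.
Qed.

Lemma memI_lt A k : memI A k -> (k < n)%N.
Proof. by case/existsP => j /andP[_ /eqP <-]. Qed.

Lemma memI_inj A B : (forall k, memI A k = memI B k) -> A = B.
Proof. by move=> H; apply/setP => i; rewrite -!memI_ord H. Qed.

Lemma memI_set (Bp : nat -> bool) k : memI [set i : 'I_n | Bp i] k = (k < n)%N && Bp k.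
Proof.
apply/existsP/andP => [[j /andP[]]|[kn Bk]].
  by rewrite inE => Bj /eqP <-; split.
by exists (Ordinal kn); rewrite inE Bk eqxx.
Qed.

Lemma memI_U1 A (x : 'I_n) k : memI (x |: A) k = (x == k :> nat) || memI A k.
Proof.
apply/existsP/orP => [[j /andP[]]|[/eqP E|/existsP[j /andP[jA E]]]].
- rewrite in_setU1 => /orP[/eqP->|jA] /eqP E; first by left; rewrite E.
  by right; apply/existsP; exists j; rewrite jA E eqxx.
- by exists x; rewrite in_setU1 eqxx /= E.
- by exists j; rewrite in_setU1 jA orbT E.
Qed.

Lemma memI0 k : memI (@set0 ('I_n)) k = false.
Proof. by apply/existsP => -[j]; rewrite in_set0. Qed.

Lemma aptP A : apt A <-> (forall k, memI A k -> (k.+1 < n)%N) /\ (forall k, memI A k -> ~~ memI A k.+1).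
Proof.
split.
  case/andP => /forallP H1 /forallP H2; split.
    by move=> k /existsP[i /andP[iI /eqP <-]]; have := H1 i; rewrite iI.
  move=> k /existsP[i /andP[iI /eqP Ei]]; apply/negP => /existsP[j /andP[jI /eqP Ej]].
  have := H2 i; move/forallP/(_ j); rewrite iI jI /= Ei Ej eqxx //.
case=> H1 H2; apply/andP; split; apply/forallP => i.
  by apply/implyP => iI; apply: H1; rewrite memI_ord.
apply/forallP => j; apply/implyP => /andP[iI jI]; apply/eqP => E.
by have := H2 i; rewrite memI_ord iI -E memI_ord jI => /(_ isT).
Qed.
End Mem.

Lemma card_tr n p (A : {set 'I_p}) : (p <= n)%N -> #|[set i : 'I_n | memI A i]| = #|A|.
Proof.
move=> H.
have -> : [set i : 'I_n | memI A i] = widen_ord H @: A.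
  apply/setP => i; rewrite inE.
  apply/existsP/imsetP => [[j /andP[jA /eqP E]]|[j jA ->]].
    by exists j => //; apply: val_inj; rewrite /= E.
  by exists j; rewrite jA eqxx.
apply: card_imset => x y E; apply: val_inj; exact: (congr1 val E).
Qed.

Lemma TyJ n : ty (J n) = Some (n, n).
Proof.
rewrite /jw; apply: ty_big => I _.
by rewrite /= /cupI /capI cupwE capwE ty_wcap ty_wcup /= eqxx.
Qed.

Ltac tyc ::= match goal with |- ty _ = _ => try solve [eauto];
  simpl; rewrite ?TyJ ?ty_wcap ?ty_wcup /=; rewrite ?addn1 ?addn2 ?addn0 ?add0n ?addSn ?addnS ?eqxx /=;
  try reflexivity; try (congr (Some (_, _)); lia) end.
Ltac wtc ::= match goal with |- is_true (wt _) => rewrite /wt /= ?TyJ // end.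

Lemma Jsmall n : (n <= 1)%N -> eqv (J n) (tid K n).
Proof.
move=> n1.
have Hp : perm_eq (filter (@apt n) (index_enum {set 'I_n})) [:: set0].
  apply: uniq_perm => //; first by apply: filter_uniq; apply: index_enum_uniq.
  move=> I; rewrite mem_filter mem_index_enum andbT inE.
  apply/idP/eqP => [/aptP[H1 _]|->].
    apply/setP => i; rewrite in_set0; apply/negP => iI.
    by have := H1 i; rewrite memI_ord iI => /(_ isT); lia.
  by apply/aptP; split => k; rewrite memI0.
rewrite /jw -big_filter (big_perm_eqv _ Hp); last first.
  by move=> I; rewrite /= /cupI /capI cupwE capwE ty_wcap ty_wcup /= eqxx.
rewrite big_cons big_nil e_add0; sc; last first.
  by rewrite /= /cupI /capI cupwE capwE ty_wcap ty_wcup /= eqxx.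
rewrite cards0 expr0 e_scal1; last first.
  by rewrite /= /cupI /capI cupwE capwE ty_wcap ty_wcup /= eqxx.
by clear Hp; case: n n1 => [|[|]] //= _; rewrite e_idl; sc; reflexivity.
Qed.

Lemma reindex_perm (T1 T2 : finType) (P1 : pred T1) (P2 : pred T2) (h : T1 -> T2) :
  (forall x y, P1 x -> P1 y -> h x = h y -> x = y) -> (forall x, P1 x -> P2 (h x)) ->
  (forall y, P2 y -> exists2 x, P1 x & y = h x) ->
  perm_eq (map h (filter P1 (index_enum T1))) (filter P2 (index_enum T2)).
Proof.
move=> Hi H1 H2; apply: uniq_perm.
- rewrite map_inj_in_uniq ?filter_uniq ?index_enum_uniq // => x y.
  by rewrite !mem_filter => /andP[Px _] /andP[Py _]; apply: Hi.
- by rewrite filter_uniq ?index_enum_uniq.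
- move=> y; rewrite mem_filter mem_index_enum andbT.
  apply/mapP/idP => [[x]|Py].
    by rewrite mem_filter => /andP[Px _] ->; apply: H1.
  by case: (H2 _ Py) => x Px ->; exists x => //; rewrite mem_filter Px mem_index_enum.
Qed.

Definition G n (I : {set 'I_n}) := tscal ((-1) ^+ #|I|) (tcomp (cupI K I) (capI K I)).

Lemma ty_G n (I : {set 'I_n}) : ty (G I) = Some (n, n).
Proof. by rewrite /= /cupI /capI cupwE capwE ty_wcap ty_wcup /= eqxx. Qed.
Lemma ty_tens f g a b c d : ty f = Some (a, b) -> ty g = Some (c, d) ->
  ty (ttens f g) = Some ((a + c)%N, (b + d)%N).
Proof. by move=> /= -> ->. Qed.
Ltac tyc ::= match goal with |- ty _ = _ => try solve [eauto];
  simpl; rewrite ?TyJ ?ty_wcap ?ty_wcup ?ty_G /=; rewrite ?addn1 ?addn2 ?addn0 ?add0n ?addSn ?addnS ?eqxx /=;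
  try reflexivity; try (congr (Some (_, _)); lia) end.

Lemma JE n : J n = \big[tadd/tzero K n n]_(I <- filter (@apt n) (index_enum {set 'I_n})) G I.
Proof. by rewrite /jw big_filter. Qed.

Definition h1 m (I : {set 'I_m.+1}) : {set 'I_m.+2} := [set i : 'I_m.+2 | memI I i].
Definition h2 m (I : {set 'I_m}) : {set 'I_m.+2} := inord m |: [set i : 'I_m.+2 | memI I i].

Lemma memI_h1 m (I : {set 'I_m.+1}) k : memI (h1 I) k = memI I k.
Proof.
rewrite memI_set; case E: (memI I k); last by rewrite andbF.
by have := memI_lt E; rewrite andbT; lia.
Qed.

Lemma memI_h2 m (I : {set 'I_m}) k : memI (h2 I) k = (m == k) || memI I k.
Proof.
rewrite memI_U1 memI_set inordK //; congr orb.
case E: (memI I k); last by rewrite andbF.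
by have := memI_lt E; rewrite andbT; lia.
Qed.

Lemma G_h1 m (I : {set 'I_m.+1}) : apt I -> eqv (G (h1 I)) (ttens (G I) (i_ 1)).
Proof.
move=> /aptP[A1 A2].
rewrite /G card_tr // /cupI /capI !cupwE !capwE.
rewrite (@wgen_ext _ (memI (h1 I)) (memI I)); last by move=> j _; rewrite memI_h1.
rewrite (@wgen_ext _ (memI (h1 I)) (memI I)); last by move=> j _; rewrite memI_h1.
have C : forall j, j.+1 = (0 + m.+1)%N -> (0 <= j)%N -> ~~ memI I j.
  move=> j E _; apply/negP => /A1; lia.
rewrite (RP1 _ C) // (RP1 _ C) //.
rewrite -e_interchange; sc. rewrite e_idl; sc. rewrite e_tensZl; sc. reflexivity.
Qed.

Lemma G_h2 m (I : {set 'I_m}) : apt I ->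
  eqv (G (h2 I)) (tscal (-1) (ttens (G I) (tcomp cup cap))).
Proof.
move=> /aptP[A1 A2].
have cardE : #|h2 I| = #|I|.+1.
  rewrite /h2 cardsU1 card_tr; last by lia.
  have Hm : memI I m = false by case E: (memI I m) => //; have := memI_lt E; lia.
  by rewrite -memI_ord memI_set inordK // Hm andbF /= add1n.
rewrite /G cardE /cupI /capI !cupwE !capwE.
pose P k := (m == k) || memI I k.
rewrite (@wgen_ext _ (memI (h2 I)) P); last by move=> j _; rewrite memI_h2.
rewrite (@wgen_ext _ (memI (h2 I)) P); last by move=> j _; rewrite memI_h2.
have C1 : P (0 + m)%N by rewrite /P add0n eqxx.
have C2 : forall j, j.+1 = (0 + m)%N -> (0 <= j)%N -> ~~ P j.
  move=> j E _; rewrite /P negb_or; apply/andP; split; first by apply/eqP; lia.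
  by apply/negP => /A1; lia.
rewrite (RP2 _ C1 C2) // (RP2 _ C1 C2) //.
have E : forall j, (j < 0 + m)%N -> P j = memI I j.
  by move=> j jm; rewrite /P (_ : (m == j) = false) //; apply/eqP; lia.
rewrite (wgen_ext _ E) (wgen_ext _ E).
rewrite -e_interchange; sc. rewrite e_tensZl; sc. rewrite e_scalA; sc.
rewrite exprS; reflexivity.
Qed.

Lemma Ja m : eqv (J m.+2)
  (tadd (ttens (J m.+1) (i_ 1)) (tscal (-1) (ttens (J m) (tcomp cup cap)))).
Proof.
set q := fun I : {set 'I_m.+2} => ~~ memI I m.
set s := filter (@apt m.+2) (index_enum {set 'I_m.+2}).
rewrite JE -(big_perm_eqv _ (permEl (perm_filterC q s))); last exact: ty_G.
rewrite big_cat_eqv; last exact: ty_G.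
apply: e_add.
- rewrite JE big_tensl; sc; last exact: ty_G.
  rewrite !addn1; symmetry.
  rewrite (@big_eqv_in _ _ _ (filter (@apt m.+1) (index_enum _)) _ (fun I => G (h1 I))); last first.
    by move=> I; rewrite mem_filter => /andP[aI _]; symmetry; apply: G_h1.
  rewrite -(big_map (@h1 m) xpredT (@G m.+2)) /s -filter_predI.
  apply: (@big_perm_eqv _ _ _ _ _ (@G m.+2) (@ty_G m.+2)).
  apply: (@reindex_perm _ _ (@apt m.+1) (predI q (@apt m.+2)) (@h1 m)).
  + move=> x y _ _ E; apply: memI_inj => k; by rewrite -(memI_h1 x) -(memI_h1 y) E.
  + move=> x /aptP[A1 A2]; rewrite /= /q memI_h1; apply/andP; split.
      by apply/negP => /A1; lia.
    apply/aptP; split => k; rewrite !memI_h1; [move/A1; lia | exact: A2].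
  + move=> y /andP[qy /aptP[A1 A2]].
    exists [set i : 'I_m.+1 | memI y i].
      apply/aptP; split => k; rewrite !memI_set.
        move=> /andP[_ yk]; have := A1 _ yk; case: (eqVneq k m) => [E|ne].
          by move: qy; rewrite /q; move: yk; rewrite E => ->.
        by move: ne => /eqP; lia.
      by move=> /andP[_ yk]; rewrite (negbTE (A2 _ yk)) andbF.
    apply: memI_inj => k; rewrite memI_h1 memI_set.
    case yk: (memI y k); rewrite ?andbF ?andbT //; have := A1 _ yk; lia.
- rewrite JE big_tensl; sc; last exact: ty_G.
  rewrite !addn2 big_scal; last by move=> I; rewrite (ty_tens (ty_G I) (erefl : ty (tcomp cup cap) = Some (2%N, 2%N))) addn2.
  symmetry.
  rewrite (@big_eqv_in _ _ _ (filter (@apt m) (index_enum _)) _ (fun I => G (h2 I))); last first.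
    by move=> I; rewrite mem_filter => /andP[aI _]; symmetry; apply: G_h2.
  rewrite -(big_map (@h2 m) xpredT (@G m.+2)) /s -filter_predI.
  apply: (@big_perm_eqv _ _ _ _ _ (@G m.+2) (@ty_G m.+2)).
  apply: (@reindex_perm _ _ (@apt m) (predI (predC q) (@apt m.+2)) (@h2 m)).
  + move=> x y /aptP[A1 _] /aptP[B1 _] E; apply: memI_inj => k.
    have := congr1 (fun I => memI I k) E; rewrite /= !memI_h2.
    case: (eqVneq k m) => [->|ne].
      move=> _; case xm: (memI x m); first by move: (A1 _ xm); lia.
      by case ym: (memI y m) => //; move: (B1 _ ym); lia.
    by [].
  + move=> x /aptP[A1 A2]; rewrite /= /q memI_h2 eqxx /=; apply/aptP; split => k; rewrite !memI_h2.
      by case/orP => [/eqP <-|/A1]; lia.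
    case/orP => [/eqP <-|xk].
      rewrite negb_or; apply/andP; split; first by apply/eqP; lia.
      by apply/negP => /memI_lt; lia.
    rewrite negb_or (negbTE (A2 _ xk)) andbT; apply/eqP; have := A1 _ xk; lia.
  + move=> y /andP[qy /aptP[A1 A2]]; move: qy; rewrite /q /= negbK => ym.
    exists [set i : 'I_m | memI y i].
      apply/aptP; split => k; rewrite !memI_set.
        move=> /andP[km yk]; case: (eqVneq k.+1 m) => [E|ne].
          by have := A2 _ yk; rewrite E ym.
        by move: ne => /eqP; lia.
      by move=> /andP[_ yk]; rewrite (negbTE (A2 _ yk)) andbF.
    apply: memI_inj => k; rewrite memI_h2 memI_set.
    case: (eqVneq k m) => [->|ne]; first by rewrite ym.
    rewrite /=.
    by case yk: (memI y k); rewrite ?andbT ?andbF //; have := A1 _ yk; move: ne => /eqP; lia.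
Qed.

Definition J0 := Jsmall (n:=0) isT.
Definition J1 := Jsmall (n:=1) isT.
Lemma idS k : eqv (i_ k.+1) (ttens (i_ k) (i_ 1)).
Proof. have := @e_tid K k 1; rewrite addn1 => ->; reflexivity. Qed.



Lemma addN X a b : ty X = Some (a, b) -> eqv (tadd X (tscal (-1) X)) (tzero K a b).
Proof.
move=> H; transitivity (tadd (tscal 1 X) (tscal (-1) X)).
  by apply: e_add; [symmetry; apply: e_scal1 H | reflexivity].
rewrite -e_scalDl; last exact: H.
rewrite subrr; exact: e_scal0 H.
Qed.

Lemma ccc : eqv (ttens (tcomp cup cap) (i_ 1)) (tcomp (ttens cup (i_ 1)) (ttens cap (i_ 1))).
Proof.
transitivity (ttens (tcomp cup cap) (tcomp (i_ 1) (i_ 1))).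
  apply: e_tens; first reflexivity. by symmetry; apply: (e_idl (a:=1)).
by apply: e_interchange.
Qed.

Lemma ccc' : eqv (ttens (i_ 1) (tcomp cup cap)) (tcomp (ttens (i_ 1) cup) (ttens (i_ 1) cap)).
Proof.
transitivity (ttens (tcomp (i_ 1) (i_ 1)) (tcomp cup cap)).
  apply: e_tens; last reflexivity. by symmetry; apply: (e_idl (a:=1)).
by apply: e_interchange.
Qed.

Lemma Jb m : eqv (tcomp (ttens (J m.+1) (i_ 1)) (ttens (i_ m) cup)) (ttens (J m) cup).
Proof.
case: m => [|k].
  rewrite J1 J0 (@e_tid K 1 1) tUl //. rewrite e_idl; [reflexivity|tyc].
rewrite Ja.
rewrite e_tensDl; sc.
rewrite e_tensZl; sc.
rewrite e_compDl; sc.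
rewrite e_compZl; sc.
rewrite tA; sc. rewrite (@e_tid K 1 1).
rewrite -e_interchange; sc.
rewrite e_idr; sc. rewrite e_idl; sc.
rewrite tA; sc. rewrite (idS k). rewrite tA; sc.
rewrite -e_interchange; sc.
rewrite ccc. rewrite -e_assoc; sc. rewrite e_zigzag2.
rewrite e_comp0r; sc. rewrite e_tens0r; sc.
rewrite scal0z. rewrite e_add0; sc. reflexivity.
Qed.

Lemma Jc m : eqv (tcomp (ttens (i_ m) cap) (ttens (J m.+1) (i_ 1))) (ttens (J m) cap).
Proof.
case: m => [|k].
  rewrite J1 J0 (@e_tid K 1 1) tUl //. rewrite e_idr; [reflexivity|tyc].
rewrite Ja.
rewrite e_tensDl; sc.
rewrite e_tensZl; sc.
rewrite e_compDr; sc.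
rewrite e_compZr; sc.
rewrite tA; sc. rewrite (@e_tid K 1 1).
rewrite -e_interchange; sc.
rewrite e_idr; sc. rewrite e_idl; sc.
rewrite (idS k). rewrite tA; sc. rewrite tA; sc.
rewrite -e_interchange; sc.
rewrite ccc. rewrite e_assoc; sc. rewrite e_zigzag1.
rewrite e_comp0l; sc. rewrite e_tens0r; sc.
rewrite scal0z. rewrite e_add0; sc. reflexivity.
Qed.

Lemma cccc : eqv (tcomp (tcomp cup cap) (tcomp cup cap)) (tcomp cup cap).
Proof.
rewrite -e_assoc; sc. rewrite (@e_assoc K _ _ _ _ cap cup cap); sc. rewrite e_circle. rewrite e_idl; sc. reflexivity.
Qed.

Lemma Jd m : eqv (tcomp (J m) (J m)) (J m).
Proof.
elim/ltn_ind: m => -[|[|k]] IH.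
- rewrite J0 e_idl; sc. reflexivity.
- rewrite J1 e_idl; sc. reflexivity.
- set P := ttens (J k.+1) (i_ 1). set Q := ttens (J k) (tcomp cup cap).
  set U := ttens (i_ k) cup. set C := ttens (i_ k) cap.
  have tyP : ty P = Some (k.+2, k.+2) by tyc.
  have tyQ : ty Q = Some (k.+2, k.+2) by tyc.
  have tyU : ty U = Some (k, k.+2) by tyc.
  have tyC : ty C = Some (k.+2, k) by tyc.
  have Q1 : eqv Q (tcomp P (tcomp U C)).
    rewrite e_assoc; sc. rewrite /U Jb. rewrite /C -e_interchange; sc.
    rewrite e_idr; sc. reflexivity.
  have Q2 : eqv Q (tcomp U (tcomp C P)).
    rewrite /C Jc. rewrite /U -e_interchange; sc.
    rewrite e_idl; sc. reflexivity.
  have PP : eqv (tcomp P P) P.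
    rewrite /P -e_interchange; sc. rewrite IH // e_idl; sc. reflexivity.
  have PQ : eqv (tcomp P Q) Q.
    transitivity (tcomp P (tcomp P (tcomp U C))); first by rewrite -Q1; reflexivity.
    rewrite e_assoc; sc. rewrite PP -Q1. reflexivity.
  have QP : eqv (tcomp Q P) Q.
    transitivity (tcomp (tcomp U (tcomp C P)) P); first by rewrite -Q2; reflexivity.
    rewrite -e_assoc; sc. rewrite -e_assoc; sc. rewrite PP -Q2. reflexivity.
  have QQ : eqv (tcomp Q Q) Q.
    rewrite /Q -e_interchange; sc. rewrite IH // cccc. reflexivity.
  rewrite Ja -/P -/Q.
  rewrite e_compDl; sc. rewrite e_compDr; sc. rewrite e_compDr; sc.
  rewrite e_compZl; sc. rewrite e_compZr; sc. rewrite e_compZr; sc.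
rewrite e_compZl; sc.
  rewrite PP PQ QP QQ.
  rewrite e_scalA; sc. rewrite mulrNN mulr1 e_scal1; sc.
  rewrite (e_addC (f := tscal (-1) Q)); sc. rewrite addN; sc. rewrite e_add0; sc.
  reflexivity.
Qed.

Lemma mainm m : let Jt := ttens (J m.+1) (i_ 1) in
  eqv (J m.+2) (tadd Jt (tscal (-1) (tcomp Jt (tcomp (ttens (i_ m) cup)
        (tcomp (ttens (i_ m) cap) Jt))))).
Proof.
move=> Jt; rewrite Ja /Jt.
rewrite Jc. rewrite e_assoc; sc. rewrite Jb. rewrite -e_interchange; sc.
rewrite Jd. reflexivity.
Qed.

End W.

Theorem mainTheorem7 (K : fieldType) (n : nat) : (2 <= n)%N ->
  let J := ttens (jw K n.-1) (tid K 1) in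
  eqv (jw K n)
      (tadd J (tscal (-1)
         (tcomp J (tcomp (ttens (tid K (n - 2)) (tcup K))
                         (tcomp (ttens (tid K (n - 2)) (tcap K)) J))))).
Proof.
case: n => [|[|m]] // _.
have -> : (m.+2 - 2 = m)%N by lia.
exact: mainm.
Qed.
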